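(* Let $p,q$ be distinct positive integers, $n\ge1$, and $s$ a nonempty finite sequence of elements of $\{p,q\}$. Every orbit (cycle) of the permutation $x\mapsto A^{p,q}_n(x,s)$ of $\{p,q\}^n$ has length a power of $2$.
   Context: Let $p,q$ be distinct positive integers. Define $\mathrm{Opp}(p)=q$, $\mathrm{Opp}(q)=p$. For $x\in\{p,q\}$ and a finite sequence $s=(s_1,\dots,s_m)$ of positive integers, $RLD^{p,q}(x,s)$ is the sequence over $\{p,q\}$ consisting of $s_1$ copies of $x$, then $s_2$ copies of $\mathrm{Opp}(x)$, then $s_3$ copies of $x$, and so on alternately. For $n\ge1$ and $x=(x_1,\dots,x_n)\in\{p,q\}^n$: $RLD^{p,q}_1(x_1,s)=RLD^{p,q}(x_1,s)$ and $RLD^{p,q}_n(x_{1:n},s)=RLD^{p,q}(x_n, RLD^{p,q}_{n-1}(x_{1:n-1},s))$. For a nonempty sequence $t$ over $\{p,q\}$, $\mathrm{OppEnd}(t)=\mathrm{Opp}(\text{last entry of } t)$. The automaton $A^{p,q}_n$ has state set $\{p,q\}^n$; for a state $x$ and a nonempty finite sequence $s$ over $\{p,q\}$, $A^{p,q}_n(x,s)$ is the state whose $i$-th coordinate is $\mathrm{OppEnd}(RLD^{p,q}_i(x_{1:i},s))$, $i=1,\dots,n$. The map $x\mapsto A^{p,q}_n(x,s)$ is a permutation of $\{p,q\}^n$. *)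

(* Defs.v *)
From mathcomp Require Import all_boot.
Set Implicit Arguments. Unset Strict Implicit. Unset Printing Implicit Defensive.

Definition opp (p q x : nat) : nat := if x == p then q else p.

Fixpoint rld (p q x : nat) (s : seq nat) : seq nat :=
  match s with
  | [::] => [::]
  | k :: s' => nseq k x ++ rld p q (opp p q x) s'
  end.

(* RLD_n^{p,q}(x_{1:n}, s) = RLD(x_n, RLD_{n-1}(x_{1:n-1}, s)), RLD_1(x_1,s)=RLD(x_1,s). *)
Definition rldn (p q : nat) (xs s : seq nat) : seq nat :=
  foldl (fun t xi => rld p q xi t) s xs.

(* OppEnd(t) = Opp(last entry of t) (t nonempty in all uses). *)
Definition oppend (p q : nat) (t : seq nat) : nat := opp p q (last 0 t).

(* A_n^{p,q}(x, s): i-th coordinate (i = 1..n) is OppEnd(RLD_i(x_{1:i}, s)). *)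
Definition automaton (p q n : nat) (x s : seq nat) : seq nat :=
  mkseq (fun i => oppend p q (rldn p q (take i.+1 x) s)) n.

Definition over_pq (p q : nat) (t : seq nat) : bool :=
  all (fun a => (a == p) || (a == q)) t.

(* Main.v *)
Require Import Defs.
From mathcomp Require Import all_boot.

Section S.
Variables (p q : nat) (s : seq nat).
Hypotheses (hp : 0 < p) (hq : 0 < q) (hpq : p != q) (hs : s != [::]) (hsp : over_pq p q s).

Local Notation pq a := ((a == p) || (a == q)).

Lemma opp_pq a : pq (opp p q a).
Proof. by rewrite /opp; case: ifP => _; apply/orP; [right|left]. Qed.

Lemma oppK a : pq a -> opp p q (opp p q a) = a.
Proof.
have hqp : (q == p) = false by rewrite eq_sym (negbTE hpq).
by move=> /orP[]/eqP->; rewrite /opp ?eqxx ?hqp ?eqxx.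
Qed.

Lemma opp_neq a : opp p q a != a.
Proof.
rewrite /opp; case: ifP => [/eqP->|H]; first by rewrite eq_sym.
by apply/eqP => E; move: H; rewrite -E eqxx.
Qed.

Lemma pq_pos a : pq a -> 0 < a.
Proof. by case/orP => /eqP->. Qed.

Lemma rld_pq a T : pq a -> over_pq p q (rld p q a T).
Proof.
elim: T a => [|k T IH] a ha //=.
rewrite /over_pq all_cat all_nseq ha orbT /=.
exact: IH (opp_pq a).
Qed.

Lemma rld_ne a T : over_pq p q T -> T != [::] -> rld p q a T != [::].
Proof.
case: T => [|k T] //= /andP[hk _] _.
have: 0 < k by exact: pq_pos.
by case: k {hk}.
Qed.

Lemma last_rld a T x0 : pq a -> over_pq p q T -> T != [::] ->
  last x0 (rld p q a T) = if odd (size T) then a else opp p q a.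
Proof.
elim: T a x0 => [|k T IH] a x0 ha //= /andP[hk hT] _.
rewrite last_cat.
case: T IH hT => [|k2 T] IH hT /=.
  have: 0 < k by exact: pq_pos.
  case: k {hk} => // k _ /=.
  by elim: k => //.
rewrite IH //= ?opp_pq //.
by case: (odd (size T)); rewrite ?oppK.
Qed.

Lemma foldl_inv t T : over_pq p q t -> over_pq p q T -> T != [::] ->
  let R := foldl (fun T xi => rld p q xi T) T t in over_pq p q R && (R != [::]).
Proof.
elim: t T => [|a t IH] T /=; first by move=> _ -> ->.
move=> /andP[ha ht] hT hT0.
apply: IH => //; [exact: rld_pq | exact: rld_ne].
Qed.

Definition c t := odd (size (rldn p q t s)).
Definition flip (b : bool) a := if b then opp p q a else a.

Lemma over_take i {x} : over_pq p q x -> over_pq p q (take i x).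
Proof. by rewrite /over_pq -{1}(cat_take_drop i x) all_cat => /andP[]. Qed.

Lemma key i x : over_pq p q x -> i < size x ->
  oppend p q (rldn p q (take i.+1 x) s) = flip (c (take i x)) (nth 0 x i).
Proof.
move=> hx hi.
have ha : pq (nth 0 x i) by move/(all_nthP 0): hx; apply.
rewrite (take_nth 0 hi) /rldn foldl_rcons /c /rldn.
have /andP[h1 h2] := @foldl_inv (take i x) s (over_take i hx) hsp hs.
rewrite /oppend last_rld // /flip.
by case: odd; rewrite ?oppK.
Qed.

Definition G x := mkseq (fun i => flip (c (take i x)) (nth 0 x i)) (size x).

Lemma flip_pq b a : pq a -> pq (flip b a).
Proof. by case: b => //= _; apply: opp_pq. Qed.

Lemma autoG x : over_pq p q x -> automaton p q (size x) x s = G x.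
Proof.
move=> hx; apply: (@eq_from_nth _ 0); first by rewrite !size_mkseq.
move=> i; rewrite size_mkseq => hi.
by rewrite !nth_mkseq // key.
Qed.

Lemma G_pq x : over_pq p q x -> over_pq p q (G x) && (size (G x) == size x).
Proof.
move=> hx; rewrite size_mkseq eqxx andbT.
apply/allP => y /mapP[i]; rewrite mem_iota add0n => hi ->.
apply: flip_pq; by move/(all_nthP 0): hx; apply.
Qed.

Lemma G_rcons x a : G (rcons x a) = rcons (G x) (flip (c x) a).
Proof.
apply: (@eq_from_nth _ 0); first by rewrite size_rcons !size_mkseq size_rcons.
move=> i; rewrite size_mkseq size_rcons ltnS => hi; rewrite /G.
rewrite nth_mkseq ?size_rcons ?ltnS // nth_rcons nth_rcons size_mkseq.
rewrite -cats1 take_cat.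
case: ltngtP hi => // [hlt|->] _; first by rewrite nth_mkseq.
by rewrite subnn take0 cats0.
Qed.

Lemma flipK b1 b2 a : pq a -> flip b1 (flip b2 a) = flip (b2 (+) b1) a.
Proof. by move=> ha; case: b1; case: b2 => //=; rewrite oppK. Qed.

Fixpoint Bacc x j : bool :=
  if j is j'.+1 then Bacc x j' (+) c (iter j' G x) else false.

Lemma iter_rcons x a j : pq a ->
  iter j G (rcons x a) = rcons (iter j G x) (flip (Bacc x j) a).
Proof.
move=> ha; elim: j => [|j IH] //=; by rewrite IH G_rcons flipK.
Qed.

Lemma Bacc_add x P i : iter P G x = x -> Bacc x (P + i) = Bacc x P (+) Bacc x i.
Proof.
move=> hP; elim: i => [|i IH]; first by rewrite addn0 addbF.
by rewrite addnS /= IH [P + i]addnC iterD hP addbA.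
Qed.

Lemma Bacc_mul x P k : iter P G x = x -> Bacc x (k * P) = odd k && Bacc x P.
Proof.
move=> hP; elim: k => [|k IH] //.
by rewrite mulSn Bacc_add // IH /=; case: (Bacc x P); case: odd.
Qed.

Lemma iter_mul x P k : iter P G x = x -> iter (k * P) G x = x.
Proof.
move=> hP; elim: k => [|k IH] //.
by rewrite mulSn iterD IH.
Qed.

Lemma main x : over_pq p q x -> exists m,
  iter (2 ^ m) G x = x /\ forall j, iter j G x = x -> 2 ^ m %| j.
Proof.
elim/last_ind: x => [|x a IH].
  move=> _; exists 0; split => //.
rewrite /over_pq all_rcons => /andP[ha hx].
have [m [hP hD]] := IH hx.
case hb: (Bacc x (2 ^ m)).
  exists m.+1; split.
    rewrite iter_rcons // expnSr mulnC iter_mul // Bacc_mul // hb /=.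
  move=> j; rewrite iter_rcons // => /eqP; rewrite eqseq_rcons => /andP[/eqP hj /eqP hf].
  have hd := hD _ hj.
  rewrite -(divnK hd) Bacc_mul // hb andbT in hf.
  rewrite -(divnK hd) expnSr mulnC dvdn_pmul2r ?expn_gt0 //.
  rewrite dvdn2; apply/negP => ho; move: hf; rewrite ho /=.
  by move/eqP; rewrite (negbTE (opp_neq a)).
exists m; split.
  by rewrite iter_rcons // hb hP.
move=> j; rewrite iter_rcons // => /eqP; rewrite eqseq_rcons => /andP[/eqP hj _].
exact: hD.
Qed.

Lemma iter_auto x j : over_pq p q x ->
  iter j (fun y => automaton p q (size x) y s) x = iter j G x.
Proof.
move=> hx; elim: j => [|j IH] //=.
rewrite IH.
have [] : over_pq p q (iter j G x) /\ size (iter j G x) = size x.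
  elim: j {IH} => [|j [h1 h2]] //=.
  have /andP[h3 /eqP h4] := @G_pq _ h1.
  by rewrite h3 h4 h2.
move=> h1 h2; by rewrite -{1}h2 autoG.
Qed.

End S.

Theorem lemma5 (p q n : nat) (s : seq nat) :
  0 < p -> 0 < q -> p != q -> 1 <= n ->
  s != [::] -> over_pq p q s ->
  forall x : seq nat, size x = n -> over_pq p q x ->
  exists m : nat,
    iter (2 ^ m) (fun y => automaton p q n y s) x = x /\
    (forall j, 0 < j < 2 ^ m -> iter j (fun y => automaton p q n y s) x != x).
Proof.
move=> hp hq hpq _ hs hsp x hn hx.
have [m [h1 h2]] := @main p q s hpq x hx.
have IA := @iter_auto p q s hp hq hpq hs hsp x.
exists m; rewrite -hn; split; first by rewrite IA.
move=> j /andP[j0 jm]; rewrite IA //; apply/negP => /eqP /h2 hd.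
by have := dvdn_leq j0 hd; rewrite leqNgt jm.
Qed.
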